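(* Let $p$ and $q$ be odd primes such that $p=\frac{q^k-1}{q-1}$ for some positive integer $k$. Then there exists a transitive imprimitive permutation group of degree $pq$ admitting a system of imprimitivity with blocks of size $q$ whose intersection density equals $q$.
   Context: For a permutation group $G$ on a set $V$, two elements $g,h\in G$ are intersecting if $g(v)=h(v)$ for some $v\in V$; a subset $\mathcal{F}\subseteq G$ is intersecting if every pair of its elements is intersecting. The intersection density of $G$ is $\rho(G)=\max\{|\mathcal{F}|:\mathcal{F}\subseteq G \text{ intersecting}\}/\max_{v\in V}|G_v|$, where $G_v$ is the stabilizer of $v$. *)

(* Defs.v *)
From mathcomp Require Import all_boot all_order all_algebra all_fingroup all_solvable.
From mathcomp Require Import perm action.
Set Implicit Arguments. Unset Strict Implicit. Unset Printing Implicit Defensive.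

Section IntersectionDensity.
Variable T : finType.

Definition perm_intersecting (g h : {perm T}) : bool := [exists v, g v == h v].

Definition intersecting_family (F : {set {perm T}}) : bool :=
  [forall g in F, forall h in F, perm_intersecting g h].

Definition max_intersecting (G : {set {perm T}}) : nat :=
  \max_(F : {set {perm T}} | (F \subset G) && intersecting_family F) #|F|.

Definition max_stab (G : {group {perm T}}) : nat :=
  \max_(v : T) #|('C_G[v | 'P])%g|.

Definition intersection_density (G : {group {perm T}}) : rat :=
  ((max_intersecting G)%:R / (max_stab G)%:R)%R.

Definition block_system (G : {group {perm T}}) (P : {set {set T}}) : Prop :=
  partition P [set: T] /\ (forall g B, g \in G -> B \in P -> g @: B \in P).

Definition imprimitive (G : {group {perm T}}) : Prop :=
  exists P : {set {set T}}, block_system G P /\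
    (forall B, B \in P -> 1 < #|B| < #|T|).

End IntersectionDensity.

(* Main.v *)
Require Import Defs.
From mathcomp Require Import all_boot all_order all_algebra all_fingroup all_solvable.
From mathcomp Require Import perm action.
From mathcomp Require Import all_field.
Set Implicit Arguments. Unset Strict Implicit. Unset Printing Implicit Defensive.
Import GRing.Theory.

Section Code.
Variables p q : nat.
Hypotheses (pp : prime p) (qp : prime q).
Variable U : {set {ffun 'Z_p -> 'F_q}}.
Hypothesis Uz : 0%R \in U.
Hypothesis UD : forall u v, u \in U -> v \in U -> (u + v)%R \in U.
Hypothesis UN : forall u, u \in U -> (- u)%R \in U.
Hypothesis US : forall u (j : 'Z_p), u \in U -> [ffun m => u (m + j)%R] \in U.
Hypothesis UZ : forall u, u \in U -> exists i, u i = 0%R.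
Hypothesis U1 : exists u i, u \in U /\ u i != 0%R.

Local Notation T := ('Z_p * 'F_q)%type.

Lemma cardT : #|{: T}| = p * q.
Proof.
rewrite card_prod card_Fp // card_ord Zp_cast //; exact: prime_gt1.
Qed.

Definition ee (t : T) : 'I_(p * q) := cast_ord cardT (enum_rank t).
Definition dd (x : 'I_(p * q)) : T := enum_val (cast_ord (esym cardT) x).
Lemma eeK : cancel ee dd.
Proof. by move=> t; rewrite /dd /ee cast_ordK enum_rankK. Qed.
Lemma ddK : cancel dd ee.
Proof. by move=> x; rewrite /dd /ee enum_valK cast_ordKV. Qed.

Definition fmap (j : 'Z_p) (u : {ffun 'Z_p -> 'F_q}) (t : T) : T :=
  (t.1 + j, t.2 + u (t.1 + j))%R.
Definition fmapi (j : 'Z_p) (u : {ffun 'Z_p -> 'F_q}) (t : T) : T :=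
  (t.1 - j, t.2 - u t.1)%R.
Lemma fmapK j u : cancel (fmap j u) (fmapi j u).
Proof. by case=> a b; rewrite /fmap /fmapi /= addrK addrK. Qed.

Definition gfun j u (x : 'I_(p * q)) := ee (fmap j u (dd x)).
Lemma gfun_inj j u : injective (gfun j u).
Proof.
move=> x y; rewrite /gfun => /(can_inj eeK) /(can_inj (@fmapK j u)).
exact: (can_inj ddK).
Qed.
Definition gperm j u : {perm 'I_(p * q)} := perm (@gfun_inj j u).

Lemma dd_gperm j u x : dd (gperm j u x) = fmap j u (dd x).
Proof. by rewrite permE /gfun eeK. Qed.

Definition shift (u : {ffun 'Z_p -> 'F_q}) (j : 'Z_p) := [ffun m => u (m + j)%R].

Lemma gpermM j u j' u' :
  (gperm j u * gperm j' u')%g = gperm (j + j')%R (shift u (- j') + u')%R.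
Proof.
apply/permP => x; rewrite permM; apply: (can_inj ddK).
rewrite !dd_gperm; case: (dd x) => a b; rewrite /fmap /=.
by rewrite !ffunE /= !addrA addrK.
Qed.

Lemma gperm1 : gperm 0%R 0%R = 1%g.
Proof.
apply/permP => x; rewrite perm1; apply: (can_inj ddK).
by rewrite dd_gperm; case: (dd x) => a b; rewrite /fmap /= ffunE !addr0.
Qed.

Lemma gperm_inj j u j' u' : gperm j u = gperm j' u' -> j = j' /\ u = u'.
Proof.
move=> E.
have H t : fmap j u t = fmap j' u' t.
  by rewrite -[t]eeK -!dd_gperm E.
have jj : j = j'.
  have E1 : (0 + j = 0 + j')%R := congr1 fst (H (0, 0)%R).
  by rewrite !add0r in E1.
split=> //; subst j'; apply/ffunP => m.
have E2 : (0 + u (m - j + j) = 0 + u' (m - j + j))%R := congr1 snd (H (m - j, 0)%R).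
by rewrite subrK !add0r in E2.
Qed.

Definition Sg := [set gperm t.1 t.2 | t in setX [set: 'Z_p] U].

Lemma memSg j u : u \in U -> gperm j u \in Sg.
Proof. by move=> uU; apply/imsetP; exists (j, u); rewrite // in_setX in_setT uU. Qed.

Lemma SgP g : reflect (exists j u, u \in U /\ g = gperm j u) (g \in Sg).
Proof.
apply: (iffP imsetP).
  move=> [[j u] H ->]; move: H; rewrite in_setX /= => /andP [_ uU].
  by exists j, u.
move=> [j [u [uU ->]]].
by exists (j, u); rewrite // in_setX in_setT uU.
Qed.

Lemma shiftU u j : u \in U -> shift u j \in U.
Proof. exact: US. Qed.

Lemma Sg_group : group_set Sg.
Proof.
apply/group_setP; split; first by rewrite -gperm1 memSg.
move=> g h /SgP [j [u [uU ->]]] /SgP [j' [u' [uU' ->]]].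
by rewrite gpermM memSg // UD // shiftU.
Qed.

Canonical Gg := Group Sg_group.


Lemma UMn u n : u \in U -> (u *+ n)%R \in U.
Proof. by move=> uU; elim: n => [|n IH]; rewrite ?mulr0n // mulrS UD. Qed.

Lemma coordU i c : exists u, u \in U /\ u i = c.
Proof.
case: U1 => u1 [i1 [u1U a0]].
pose u' := shift u1 (i1 - i)%R.
have u'U : u' \in U by exact: shiftU.
have u'i : u' i = u1 i1 by rewrite /u' /shift ffunE addrC subrK.
pose b : 'F_q := ((u1 i1)^-1 * c)%R.
exists (u' *+ (val b))%R; split; first exact: UMn.
rewrite ffunMnE u'i -mulr_natr.
have -> : ((val b)%:R = b :> 'F_q)%R by rewrite natr_Zp.
by rewrite /b mulrA mulfV // mul1r.
Qed.

Definition U0 i := [set u in U | u i == 0%R].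

Lemma card_U0 i : #|U| = #|U0 i| * q.
Proof.
pose w c := odflt 0%R [pick u in U | u i == c].
have wP c : w c \in U /\ w c i = c.
  rewrite /w; case: pickP => [u /andP [uU /eqP uc] | H] //=.
  by case: (coordU i c) => u [uU ui]; have := H u; rewrite uU ui eqxx.
pose phi (t : {ffun 'Z_p -> 'F_q} * 'F_q) := (t.1 + w t.2)%R.
have inj : {in setX (U0 i) [set: 'F_q] &, injective phi}.
  move=> [u0 c] [u0' c']; rewrite !in_setX !inE /phi /= => /andP [/andP [_ /eqP h0] _].
  move=> /andP [/andP [_ /eqP h0'] _] E.
  have Ei : c = c'.
    have := congr1 (fun f : {ffun 'Z_p -> 'F_q} => f i) E.
    by rewrite !ffunE h0 h0' (proj2 (wP c)) (proj2 (wP c')) !add0r.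
  by subst c'; move/addIr: E => ->.
have im : phi @: setX (U0 i) [set: 'F_q] = U.
  apply/setP => u; apply/imsetP/idP.
    case=> [[u0 c]]; rewrite in_setX !inE /phi /= => /andP [/andP [u0U _] _] ->.
    by apply: UD => //; case: (wP c).
  move=> uU; exists ((u - w (u i))%R, u i); last by rewrite /phi /= subrK.
  rewrite in_setX !inE /= andbT; case: (wP (u i)) => wU wi.
  by rewrite UD ?UN //= ffunE ffunE wi subrr.
by rewrite -im card_in_imset // cardsX cardsT card_Fp.
Qed.

Lemma Gg_P g : reflect (exists j u, u \in U /\ g = gperm j u) (g \in Gg).
Proof. exact: SgP. Qed.

Lemma transG : [transitive Gg, on [set: 'I_(p * q)] | 'P].
Proof.
apply/imsetP; exists (ee (0, 0)%R) => //; apply/setP => y; rewrite inE; apply/esym/orbitP.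
case Ey: (dd y) => [a c].
case: (coordU a c) => u [uU ua].
exists (gperm a u); first exact: memSg.
apply: (can_inj ddK); rewrite /= dd_gperm eeK Ey /fmap /= add0r ua add0r //.
Qed.

Lemma stabG x : 'C_Gg[x | 'P]%g = gperm 0%R @: U0 (dd x).1.
Proof.
apply/setP => g; apply/idP/imsetP.
  rewrite inE => /andP [/Gg_P [j [u [uU ->]]] /astab1P /= E].
  have E' := congr1 dd E; rewrite dd_gperm in E'.
  move: E'; case: (dd x) => a c; rewrite /fmap => E'.
  have E1 : (a + j = a)%R := congr1 fst E'.
  have E2 : (c + u (a + j) = c)%R := congr1 snd E'.
  have j0 : j = 0%R by move: E1; rewrite -{2}[a]addr0 => /addrI.
  subst j; exists u; rewrite // inE uU /=; rewrite addr0 in E2.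
  by apply/eqP; apply: (addrI c); rewrite addr0.
case=> u; rewrite inE => /andP [uU /eqP u0] ->.
rewrite inE memSg //=; apply/astab1P => /=; apply: (can_inj ddK).
rewrite dd_gperm; case: (dd x) u0 => a c /= u0.
by rewrite /fmap /= addr0 u0 addr0.
Qed.

Lemma card_stabG x : #|'C_Gg[x | 'P]%g| = #|U| %/ q.
Proof.
rewrite stabG card_in_imset ?(card_U0 (dd x).1) ?mulnK ?prime_gt0 //.
by move=> u v _ _ /gperm_inj [].
Qed.

Lemma max_stabG : max_stab Gg = #|U| %/ q.
Proof.
apply/eqP; rewrite eqn_leq; apply/andP; split.
  by apply/bigmax_leqP => x _; rewrite card_stabG.
by rewrite -(card_stabG (ee (0,0)%R)); apply: (leq_bigmax_cond (ee (0,0)%R)).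
Qed.

Definition phi (g : {perm 'I_(p * q)}) : {ffun 'Z_p -> 'F_q} :=
  [ffun m => (dd (g (ee (m - (dd (g (ee (0,0)%R))).1, 0%R)%R))).2].

Lemma phi_gperm j u : phi (gperm j u) = u.
Proof.
apply/ffunP => m; rewrite ffunE !dd_gperm !eeK /fmap /=.
by rewrite !add0r subrK.
Qed.

Lemma max_intG : max_intersecting Gg = #|U|.
Proof.
apply/eqP; rewrite eqn_leq; apply/andP; split.
  apply/bigmax_leqP => F /andP [sFG intF].
  have inj : {in F &, injective phi}.
    move=> g h gF hF.
    move: (subsetP sFG g gF) (subsetP sFG h hF) => /Gg_P [j [u [uU Eg]]] /Gg_P [j' [u' [uU' Eh]]].
    rewrite Eg Eh !phi_gperm => Eu; subst u'.
    move/forallP: intF => /(_ g) /implyP /(_ gF) /forallP /(_ h) /implyP /(_ hF) /existsP [v /eqP].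
    rewrite Eg Eh => E; have E' := congr1 dd E; rewrite !dd_gperm /fmap in E'.
    have E1 : ((dd v).1 + j = (dd v).1 + j')%R := congr1 fst E'.
    by move/addrI: E1 => ->.
  rewrite -(card_in_imset inj); apply: subset_leq_card; apply/subsetP => u.
  case/imsetP => g gF ->.
  by move: (subsetP sFG g gF) => /Gg_P [j [u' [uU ->]]]; rewrite phi_gperm.
have -> : #|U| = #|gperm 0%R @: U|.
  by rewrite card_in_imset // => u v _ _ /gperm_inj [].
apply: (leq_bigmax_cond (gperm 0%R @: U)); apply/andP; split.
  by apply/subsetP => g /imsetP [u uU ->]; apply: memSg.
apply/forallP => g; apply/implyP => /imsetP [u uU ->].
apply/forallP => h; apply/implyP => /imsetP [u' uU' ->].
case: (UZ (UD uU (UN uU'))) => i; rewrite !ffunE => Ei.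
apply/existsP; exists (ee (i, 0%R)); apply/eqP; apply: (can_inj ddK).
rewrite !dd_gperm eeK /fmap /= addr0; congr (_, _); rewrite !add0r.
by apply/eqP; rewrite -subr_eq0 Ei.
Qed.

Lemma densityG : intersection_density Gg = (q%:R)%R.
Proof.
rewrite /intersection_density max_intG max_stabG (card_U0 0%R) mulnK ?prime_gt0 //.
have m0 : (0 < #|U0 0%R|)%N by apply/card_gt0P; exists 0%R; rewrite inE Uz ffunE eqxx.
by rewrite natrM mulrAC mulfV ?mul1r // Num.Theory.pnatr_eq0 -lt0n.
Qed.

Definition Pb := preim_partition (fun x : 'I_(p * q) => (dd x).1) [set: 'I_(p * q)].

Lemma Pb_mem B : B \in Pb -> exists x, B = [set y in [set: 'I_(p * q)] | (dd x).1 == (dd y).1].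
Proof. by case/imsetP => x _ ->; exists x. Qed.

Lemma card_block x : #|[set y in [set: 'I_(p * q)] | (dd x).1 == (dd y).1]| = q.
Proof.
have -> : [set y in [set: 'I_(p * q)] | (dd x).1 == (dd y).1] =
          ee @: ((fun c => ((dd x).1, c)) @: [set: 'F_q]).
  apply/setP => y; apply/idP/imsetP.
    rewrite !inE => /eqP E; exists (dd y); rewrite ?ddK //.
    by apply/imsetP; exists (dd y).2 => //; rewrite E; case: (dd y).
  case=> t /imsetP [c _ ->] ->. rewrite !inE eeK /=. exact: eqxx.
rewrite card_imset; last exact: (can_inj eeK).
rewrite card_imset ?cardsT ?card_Fp //.
by move=> c c' [].
Qed.

Lemma blockG : block_system Gg Pb /\ (forall B, B \in Pb -> #|B| = q).
Proof.
split; last by move=> B /Pb_mem [x ->]; exact: card_block.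
split; first exact: preim_partitionP.
move=> g B /Gg_P [j [u [uU ->]]] /Pb_mem [x ->].
have -> : gperm j u @: [set y in [set: 'I_(p * q)] | (dd x).1 == (dd y).1] =
          [set y in [set: 'I_(p * q)] | (dd (gperm j u x)).1 == (dd y).1].
  apply/setP => y; apply/imsetP/idP.
    case=> z; rewrite !inE => /eqP E ->.
    by rewrite !dd_gperm /fmap /= E.
  rewrite !inE => /eqP E; exists ((gperm j u)^-1%g y); last by rewrite permKV.
  rewrite !inE; apply/eqP; apply: (addIr j).
  have := E; rewrite -{1}(permKV (gperm j u) y) !dd_gperm /fmap /=.
  by [].
by apply/imsetP; exists (gperm j u x).
Qed.

End Code.


Section Decomp.
Local Open Scope ring_scope.
Variable F : finFieldType.
Variables p q : nat.
Hypotheses (pp : prime p) (qp : prime q) (chF : q \in [char F]).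
Hypothesis cardF : (#|F|.-1 = q.-1 * p)%N.
Hypothesis qp_lt : (q.-1 < p)%N.
Variable z : F.
Hypothesis zprim : p.-primitive_root z.

Lemma natF_inj n m : (m <= n)%N -> (n < q)%N -> n%:R = m%:R :> F -> n = m.
Proof.
move=> mn nq E.
have : (q %| n - m)%N by rewrite (dvdn_pcharf chF) natrB // E subrr.
case: (posnP (n - m)) => [/eqP|pos].
  by rewrite subn_eq0 => nm _; apply/eqP; rewrite eqn_leq nm.
move=> /(dvdn_leq pos) H; exfalso.
by have := leq_ltn_trans H (leq_ltn_trans (leq_subr m n) nq); rewrite ltnn.
Qed.

Lemma natF_pow n : (0 < n < q)%N -> (n%:R : F) ^+ q.-1 = 1.
Proof.
move=> /andP [n0 nq].
have nz : (n%:R : F) != 0.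
  by rewrite -(dvdn_pcharf chF); apply/negP => /(dvdn_leq n0); rewrite leqNgt nq.
apply: (mulIf nz); rewrite mul1r -exprSr prednK ?prime_gt0 //.
by rewrite -(pFrobenius_autE chF) pFrobenius_aut_nat.
Qed.

Lemma fixed_nat (w : F) : w ^+ q.-1 = 1 -> exists n, w = n%:R.
Proof.
move=> wQ.
have q1 : (0 < q.-1)%N by rewrite -ltnS prednK ?prime_gt1 ?prime_gt0.
case: (boolP (w \in [seq n%:R | n <- iota 1 q.-1])) => [/mapP [n _ ->]|nin].
  by exists n.
have P0 : ('X^(q.-1) - 1%:P : {poly F}) != 0.
  by rewrite -size_poly_eq0 size_XnsubC.
exfalso.
suff: (size (w :: [seq n%:R | n <- iota 1 q.-1]) < size ('X^(q.-1) - 1%:P : {poly F})%R)%N.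
  by rewrite size_XnsubC //= size_map size_iota ltnn.
apply: max_poly_roots P0 _ _.
  rewrite /= rootE !hornerE wQ subrr eqxx /=.
  apply/allP => x /mapP [n]; rewrite mem_iota => nr ->.
  rewrite rootE !hornerE natF_pow ?subrr //.
  by move: nr; rewrite add1n (prednK (prime_gt0 qp)).
rewrite /= nin /= map_inj_in_uniq ?iota_uniq //.
move=> n m; rewrite !mem_iota !add1n (prednK (prime_gt0 qp)) => /andP [_ nq] /andP [_ mq] E.
case: (leqP m n) => [mn|nm]; first exact: natF_inj.
by apply/esym; apply: natF_inj => //; apply: ltnW.
Qed.

Lemma decomp (x : F) : x != 0 -> exists c n : nat, x * z ^+ c = n%:R.
Proof.
move=> x0.
have xN : x ^+ (q.-1 * p) = 1.
  have F0 : (0 < #|F|)%N by apply/card_gt0P; exists 0.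
  apply: (mulIf x0); rewrite mul1r -exprSr -cardF prednK //.
  exact: expf_card.
have := prim_rootP zprim (x := x ^+ q.-1); rewrite -exprM xN => /(_ erefl) [j yj].
have pgt0 : (0 < p)%N by exact: prime_gt0.
case: (Bezoutl q.-1 pgt0) => a _ Ha.
have q1 : (0 < q.-1)%N by rewrite -ltnS prednK ?prime_gt1 ?prime_gt0.
have cop : coprime p q.-1.
  rewrite prime_coprime //; apply/negP => /(dvdn_leq q1).
  by rewrite leqNgt qp_lt.
rewrite (eqP cop) in Ha.
exists (j * a)%N.
have [n ->] : exists n : nat, x * z ^+ (j * a) = n%:R.
  apply: fixed_nat.
  rewrite exprMn -exprM yj -exprD.
  apply/eqP; rewrite -(prim_order_dvd zprim).
  have -> : (j + j * a * q.-1 = j * (1 + a * q.-1))%N by rewrite mulnDr muln1 mulnA.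
  exact: dvdn_mull.
by exists n.
Qed.
End Decomp.

Section Build.
Local Open Scope ring_scope.
Variable F : finFieldType.
Variables p q : nat.
Hypotheses (pp : prime p) (qp : prime q) (chF : q \in [char F]).
Hypothesis cardF : (#|F|.-1 = q.-1 * p)%N.
Hypothesis qp_lt : (q.-1 < p)%N.
Variable z : F.
Hypothesis zprim : p.-primitive_root z.
Variable chi : F -> 'F_q.
Hypothesis chiD : forall x y, chi (x + y) = chi x + chi y.
Hypothesis chi1 : exists v, chi v != 0.
Hypothesis chiK : exists h, h != 0 /\ chi h = 0.

Lemma chi0 : chi 0 = 0.
Proof. by apply: (addrI (chi 0)); rewrite -chiD !addr0. Qed.
Lemma chiN x : chi (- x) = - chi x.
Proof. by apply: (addrI (chi x)); rewrite -chiD !subrr chi0. Qed.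
Lemma chiMn x n : chi (x *+ n) = chi x *+ n.
Proof. by elim: n => [|n IH]; rewrite ?mulr0n ?chi0 // !mulrS chiD IH. Qed.

Definition uu (v : F) : {ffun 'Z_p -> 'F_q} := [ffun i : 'Z_p => chi (z ^+ i * v)].
Definition UU := [set uu v | v in [set: F]].

Lemma zprim' : (Zp_trunc p).+2.-primitive_root z.
Proof. by rewrite Zp_cast ?prime_gt1. Qed.

Lemma zZp (m j : 'Z_p) : z ^+ (m + j)%R = z ^+ m * z ^+ j.
Proof. by rewrite -exprD -(prim_expr_mod zprim' (m + j)%N). Qed.

Lemma UU0 : 0 \in UU.
Proof.
apply/imsetP; exists 0 => //; apply/ffunP => i; by rewrite !ffunE mulr0 chi0.
Qed.

Lemma UUD u v : u \in UU -> v \in UU -> u + v \in UU.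
Proof.
move=> /imsetP [a _ ->] /imsetP [b _ ->]; apply/imsetP; exists (a + b) => //.
by apply/ffunP => i; rewrite !ffunE mulrDr chiD.
Qed.

Lemma UUN u : u \in UU -> - u \in UU.
Proof.
move=> /imsetP [a _ ->]; apply/imsetP; exists (- a) => //.
by apply/ffunP => i; rewrite !ffunE mulrN chiN.
Qed.

Lemma UUS u (j : 'Z_p) : u \in UU -> [ffun m => u (m + j)%R] \in UU.
Proof.
move=> /imsetP [a _ ->]; apply/imsetP; exists (z ^+ j * a) => //.
by apply/ffunP => i; rewrite !ffunE zZp mulrA.
Qed.

Lemma UUZ u : u \in UU -> exists i, u i = 0.
Proof.
move=> /imsetP [v _ ->].
case: chiK => h [h0 hK].
case: (eqVneq v 0) => [->|v0].
  by exists 0; rewrite ffunE mulr0 chi0.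
have x0 : v / h != 0 by rewrite mulf_neq0 ?invr_eq0.
case: (decomp pp qp chF cardF qp_lt zprim x0) => c [n E].
exists (inZp c); rewrite ffunE.
have -> : z ^+ (inZp c : 'Z_p) = z ^+ c.
  by rewrite -(prim_expr_mod zprim' c).
have -> : z ^+ c * v = n%:R * h by rewrite -E mulrAC divfK // mulrC.
by rewrite mulr_natl chiMn hK mul0rn.
Qed.

Lemma UU1 : exists u i, u \in UU /\ u i != 0.
Proof.
case: chi1 => v v0; exists (uu v), 0; split; first by apply/imsetP; exists v.
by rewrite ffunE expr0 mul1r.
Qed.

End Build.


Lemma arith p q k : prime p -> prime q -> 0 < k ->
  p = (q ^ k - 1) %/ (q - 1) -> [/\ (q ^ k).-1 = q.-1 * p, q.-1 < p & 1 < k].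
Proof.
move=> pp qp k0 hp.
have q1 : 0 < q.-1 by rewrite -ltnS prednK ?prime_gt1 ?prime_gt0.
have E : p = \sum_(i < k) q ^ i by rewrite hp !subn1 predn_exp mulKn.
have E2 : (q ^ k).-1 = q.-1 * p by rewrite predn_exp -E.
case: k k0 E hp E2 => [//|[|k]] _ E hp E2.
  by move: pp; rewrite E big_ord1 expn0.
split => //.
rewrite E big_ord_recl big_ord_recl expn0 expn1 addnA.
rewrite (leq_trans _ (leq_addr _ _)) // add1n ltnS; exact: leq_pred.
Qed.

Lemma fieldstuff p q k : prime p -> prime q -> 0 < k -> 1 < k ->
  (q ^ k).-1 = q.-1 * p -> q.-1 < p ->
  exists F : finFieldType, exists chF : q \in [char F]%R, exists z : F,
  exists chi : F -> 'F_q,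
    [/\ #|F|.-1 = q.-1 * p, p.-primitive_root%R z,
        (forall x y, chi (x + y)%R = (chi x + chi y)%R),
        (exists v, chi v != 0%R) & (exists h, h != 0%R /\ chi h = 0%R)].
Proof.
move=> pp qp k0 k1 cardE qlt.
case: (pPrimePowerField qp k0) => F chF cardF.
exists F, chF.
have cF : #|F|.-1 = q.-1 * p by rewrite cardF.
have : p %| #|[set: {unit F}]| by rewrite card_finField_unit cF dvdn_mull.
case/Cauchy => // u _ ordu.
have zp : (\val u ^+ p = 1)%R by rewrite -FinRing.val_unitX -ordu expg_order.
case: (prim_order_exists (prime_gt0 pp) zp) => m mprim mp.
have mE : m = p.
  case/primeP: (pp) => _ /(_ m mp) /orP [/eqP m1|/eqP //].
  subst m; have := prim_expr_order mprim; rewrite expr1 => u1.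
  have : u = 1%g by apply: val_inj.
  by move=> uE; move: ordu; rewrite uE order1 => p1; move: pp; rewrite -p1.
subst m; exists (\val u).
have [f lin bij] := pprimeChar_vectAxiom chF.
have n0 : 0 < logn q #|pPrimeCharType chF|.
  by rewrite [#|_|]cardF pfactorK.
pose i0 : 'I_(logn q #|pPrimeCharType chF|) := Ordinal n0.
have fD (x y : F) : f (x + y)%R = (f x + f y)%R.
  by have := lin 1%R x y; rewrite !scale1r.
have chiD (x y : F) : f (x + y)%R ord0 i0 = (f x ord0 i0 + f y ord0 i0)%R.
  by rewrite fD mxE.
exists (fun x : F => f x ord0 i0); split => //.
- case: bij => g fg gf; exists (g (const_mx 1%R)); rewrite gf mxE; exact: oner_neq0.
case: (boolP [exists x : F, exists y : F, (x != y) && (f x ord0 i0 == f y ord0 i0)]).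
  case/existsP => x /existsP [y /andP [xy /eqP fxy]].
  exists (x - y)%R; split; first by rewrite subr_eq0.
  have := chiD (x - y)%R y; rewrite subrK fxy => E.
  by apply: (addIr (f y ord0 i0)); rewrite -E add0r.
rewrite negb_exists => /forallP H.
have inj : injective (fun x : F => f x ord0 i0).
  move=> x y E; case: (eqVneq x y) => // xy; exfalso.
  by have := H x; rewrite negb_exists => /forallP /(_ y); rewrite xy E eqxx.
exfalso; have Hc : #|F| <= #|'F_q| := leq_card _ inj.
move: Hc; rewrite card_Fp // cardF.
have : q ^ 1 < q ^ k by rewrite ltn_exp2l // prime_gt1.
by move=> H1 H2; have := leq_trans H1 H2; rewrite expn1 ltnn.
Qed.

Unset Implicit Arguments.

Theorem theorem1p2 (p q k : nat) :
  prime p -> prime q -> odd p -> odd q -> 0 < k ->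
  p = (q ^ k - 1) %/ (q - 1) ->
  exists G : {group {perm 'I_(p * q)}},
    [transitive G, on [set: 'I_(p * q)] | 'P] /\
    imprimitive G /\
    (exists P : {set {set 'I_(p * q)}},
        block_system G P /\ (forall B, B \in P -> #|B| = q)) /\
    intersection_density G = (q%:R)%R.
Proof.
move=> pp qp _ _ k0 hp.
case: (arith pp qp k0 hp) => cardE qlt k1.
case: (fieldstuff pp qp k0 k1 cardE qlt) => F [chF [z [chi [cF zprim chiD chi1 chiK]]]].
pose U := UU p z chi.
have Uz : 0%R \in U := UU0 p z chiD.
have UD : forall u v, u \in U -> v \in U -> (u + v)%R \in U := fun u v => @UUD F p q z chi chiD u v.
have UN : forall u, u \in U -> (- u)%R \in U := fun u => @UUN F p q z chi chiD u.
have US : forall u (j : 'Z_p), u \in U -> [ffun m => u (m + j)%R] \in U := fun u j => @UUS F p q pp z zprim chi u j.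
have UZ : forall u, u \in U -> exists i, u i = 0%R := fun u => @UUZ F p q pp qp chF cF qlt z zprim chi chiD chiK u.
have U1 : exists u i, u \in U /\ u i != 0%R := UU1 p z chi1.
exists (Gg pp qp Uz UD US).
have [bs bc] := blockG pp qp Uz UD US.
split; first exact (transG pp qp Uz UD US U1).
split.
  exists (Pb pp qp); split => // B /bc ->.
  rewrite card_ord prime_gt1 //= -{1}[q]mul1n ltn_mul2r prime_gt1 ?prime_gt0 //.
split; first by exists (Pb pp qp).
exact (densityG pp qp Uz UD UN US UZ U1).
Qed.
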